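(* The fine time-grid propagators $\Psi_j=(M_s+\tau_j Q_s)^{-1}M_s$, $j=1,\dots,N$, and the coarse time-grid propagators $\Phi_k=(M_s+\tilde{\tau}_k Q_s)^{-1}M_s$, $k=1,\dots,N_c$, are both strongly stable, i.e. their discrete $l^2$-norms satisfy $\|\Psi_j\|<1$ and $\|\Phi_k\|<1$.
   Context: Setting: the unsteady fractional Laplacian problem $\partial_t u=-(-\Delta)^{\alpha/2}u+f$ on a bounded Lipschitz domain $\Omega\subset\mathbb{R}^d$ with $\alpha\in(0,2)$ is reformulated via the Caffarelli–Silvestre extension on the truncated cylinder $\Omega\times(0,\mathcal{Z})$ with weight $z^\beta$, $\beta=1-\alpha$, and discretized by tensor-product $\mathcal{P}_1\otimes\mathcal{P}_1$ finite elements (spatial basis $\phi_i$, $i=1,\dots,n$; extended-direction basis $\psi_j$, $j=1,\dots,M-1$) and backward Euler in time on a (possibly nonuniform) mesh $0=t_0<\dots<t_N=T$ with steps $\tau_j=t_j-t_{j-1}$. The matrices are $M_s=(\frac{1}{d_\alpha}\int_\Omega\phi_i\phi_q)$, $A_s=(\frac{1}{d_\alpha}\int_\Omega\nabla\phi_i\cdot\nabla\phi_q)$, $M_z=(\int_0^{\mathcal{Z}}z^\beta\psi_j\psi_l)$, $A_z=(\int_0^{\mathcal{Z}}z^\beta\psi_j'\psi_l')$, with $d_\alpha>0$ a normalization constant. Eliminating the auxiliary (non-trace) unknowns gives the time-stepping $(M_s+\tau_{k+1}Q_s)\mathcal{U}_{k+1}=M_s\mathcal{U}_k+\tau_{k+1}\mathcal{F}_{k+1}$,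 where $Q_s$ is the Schur complement $Q_s=(m^z_{11}A_s+a^z_{11}M_s)-(\tilde m_z\otimes A_s+\tilde a_z\otimes M_s)(\tilde M_z\otimes A_s+\tilde A_z\otimes M_s)^{-1}(\tilde m_z^T\otimes A_s+\tilde a_z^T\otimes M_s)$, with $\tilde m_z,\tilde a_z$ the first rows of $M_z,A_z$ without the first entry and $\tilde M_z,\tilde A_z$ the trailing principal submatrices (indices $2,\dots,M-1$); $M_s$ and $M_s^{-1/2}Q_sM_s^{-1/2}$ are SPD. For a coarsening factor $m$, the coarse time grid is $\tilde t_i=t_{mi}$, $i=0,\dots,N_c=N/m$, with steps $\tilde\tau_k=\tilde t_k-\tilde t_{k-1}$. *)

(* Defs.v *)
From HB Require Import structures.
From mathcomp Require Import all_boot all_order all_algebra.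
From mathcomp Require Import boolp classical_sets reals.
From mathcomp Require Import mxtens.
Set Implicit Arguments. Unset Strict Implicit. Unset Printing Implicit Defensive.
Import Order.TTheory GRing.Theory Num.Theory.
Local Open Scope ring_scope.

Definition spd {R : realType} {n : nat} (A : 'M[R]_n) : Prop :=
  A^T = A /\ forall v : 'cV[R]_n, v != 0 -> 0 < (v^T *m A *m v) 0 0.

(* Schur complement Q_s of the extension problem, eliminating the non-trace
   unknowns.  Extended-direction matrices Mz Az are (p.+1)x(p.+1), i.e. M-1 = p.+1
   basis functions psi_1..psi_{M-1}; index ord0 is psi_1.
   Unknowns of the eliminated block are ordered with the Kronecker convention
   (extended-direction index) x (spatial index). *)
Definition mz_row {R : realType} {p : nat} (Z : 'M[R]_p.+1) : 'rV[R]_p :=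
  \row_(j < p) Z ord0 (lift ord0 j).
Definition mz_trail {R : realType} {p : nat} (Z : 'M[R]_p.+1) : 'M[R]_p :=
  \matrix_(i < p, j < p) Z (lift ord0 i) (lift ord0 j).

Definition Qs {R : realType} {n p : nat} (Ms As : 'M[R]_n) (Mz Az : 'M[R]_p.+1)
  : 'M[R]_n :=
  let B : 'M[R]_(n, p * n) :=
    castmx (mul1n n, erefl (p * n)) (mz_row Mz *t As + mz_row Az *t Ms) in
  let Bt : 'M[R]_(p * n, n) :=
    castmx (erefl (p * n), mul1n n) ((mz_row Mz)^T *t As + (mz_row Az)^T *t Ms) in
  let C : 'M[R]_(p * n) := mz_trail Mz *t As + mz_trail Az *t Ms in
  (Mz ord0 ord0 *: As + Az ord0 ord0 *: Ms) - B *m invmx C *m Bt.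

(* propagator (Ms + tau Q)^{-1} Ms of one backward-Euler step *)
Definition propagator {R : realType} {n : nat} (Ms Q : 'M[R]_n) (tau : R) : 'M[R]_n :=
  invmx (Ms + tau *: Q) *m Ms.

(* discrete l^2 (mass-matrix weighted) norm of a coefficient vector:
   ||v||_Ms = sqrt (v^T Ms v), the L^2(Omega) norm of the FE function (up to d_alpha) *)
Definition mnorm {R : realType} {n : nat} (Ms : 'M[R]_n) (v : 'cV[R]_n) : R :=
  Num.sqrt ((v^T *m Ms *m v) 0 0).

Definition opnorm {R : realType} {n : nat} (Ms A : 'M[R]_n) : R :=
  sup (fun r : R => exists v : 'cV[R]_n, v != 0 /\ r = mnorm Ms (A *m v) / mnorm Ms v).

(* Main.v *)
Require Import Defs.
From HB Require Import structures.
From mathcomp Require Import all_boot all_order all_algebra.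
From mathcomp Require Import boolp classical_sets reals.
From mathcomp Require Import mxtens.
From mathcomp Require Import ring lra.
Import Order.TTheory GRing.Theory Num.Theory.
Local Open Scope ring_scope.

Definition form {R : realType} {n : nat} (A : 'M[R]_n) (x y : 'cV[R]_n) : R :=
  (x^T *m A *m y) 0 0.

Lemma formDl {R : realType} {n : nat} (A : 'M[R]_n) x y z :
  form A (x + y) z = form A x z + form A y z.
Proof. by rewrite /form linearD !mulmxDl mxE. Qed.
Lemma formDr {R : realType} {n : nat} (A : 'M[R]_n) x y z :
  form A z (x + y) = form A z x + form A z y.
Proof. by rewrite /form !mulmxDr mxE. Qed.
Lemma formZl {R : realType} {n : nat} (A : 'M[R]_n) a x y :
  form A (a *: x) y = a * form A x y.
Proof. by rewrite /form linearZ -!scalemxAl mxE. Qed.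
Lemma formZr {R : realType} {n : nat} (A : 'M[R]_n) a x y :
  form A x (a *: y) = a * form A x y.
Proof. by rewrite /form -!scalemxAr mxE. Qed.
Lemma form0l {R : realType} {n : nat} (A : 'M[R]_n) y : form A 0 y = 0.
Proof. by rewrite /form trmx0 !mul0mx mxE. Qed.
Lemma form0r {R : realType} {n : nat} (A : 'M[R]_n) y : form A y 0 = 0.
Proof. by rewrite /form !mulmx0 mxE. Qed.
Lemma form_sym {R : realType} {n : nat} (A : 'M[R]_n) x y :
  A^T = A -> form A x y = form A y x.
Proof.
move=> hA; have e : (x^T *m A *m y)^T = y^T *m A *m x.
  by rewrite !trmx_mul trmxK hA mulmxA.
rewrite /form -e. by rewrite [RHS]mxE.
Qed.
Lemma form_mulr {R : realType} {n : nat} (A B : 'M[R]_n) x y :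
  form (A *m B) x y = form A x (B *m y).
Proof. by rewrite /form !mulmxA. Qed.
Lemma form_mull {R : realType} {n : nat} (A B : 'M[R]_n) x y :
  form (A *m B) x y = form B (A^T *m x) y.
Proof. by rewrite /form trmx_mul trmxK !mulmxA. Qed.

Definition sq {R : realType} {n : nat} (x : 'cV[R]_n) : R := form 1%:M x x.

Lemma sqE {R : realType} {n : nat} (x : 'cV[R]_n) : sq x = \sum_i x i 0 ^+ 2.
Proof.
rewrite /sq /form mulmx1 mxE; apply: eq_bigr => i _; by rewrite mxE expr2.
Qed.
Lemma sq_ge0 {R : realType} {n : nat} (x : 'cV[R]_n) : 0 <= sq x.
Proof. rewrite sqE; apply: sumr_ge0 => i _; exact: sqr_ge0. Qed.
Lemma sq_gt0 {R : realType} {n : nat} {x : 'cV[R]_n} : x != 0 -> 0 < sq x.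
Proof.
move=> hx; rewrite lt_def sq_ge0 andbT; apply/negP => /eqP h0.
move: h0; rewrite sqE => /eqP; rewrite psumr_eq0; last by move=> i _; exact: sqr_ge0.
move=> /allP hall; move/negP: hx; apply; apply/eqP/matrixP => i j.
rewrite (ord1 j) mxE; have := hall i (mem_index_enum i).
by rewrite /= sqrf_eq0 => /eqP.
Qed.

Lemma spd_ge0 {R : realType} {n : nat} {K : 'M[R]_n} x : spd K -> 0 <= form K x x.
Proof.
case=> _ hK; case: (eqVneq x 0) => [->|hx]; first by rewrite form0l.
exact/ltW/hK.
Qed.

Lemma spd_unit {R : realType} {n : nat} {K : 'M[R]_n} : spd K -> K \in unitmx.
Proof.
case=> hs hK; rewrite unitmxE unitfE; apply/negP => /det0P [v hv0 hv].
have : v^T != 0 by rewrite trmx_eq0.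
move/hK; rewrite trmxK hv mul0mx mxE; by rewrite ltxx.
Qed.

Lemma form_delta {R : realType} {n : nat} (B : 'M[R]_n) i j :
  form B (delta_mx i 0) (delta_mx j 0) = B i j.
Proof. by rewrite /form trmx_delta -rowE -colE !mxE. Qed.

Lemma form_exp {R : realType} {n : nat} (B : 'M[R]_n) u :
  form B u u = \sum_j \sum_i (u i 0 * B i j * u j 0).
Proof.
rewrite /form mxE; apply: eq_bigr => j _; rewrite mxE mulr_suml.
by apply: eq_bigr => i _; rewrite mxE.
Qed.

Lemma psd_ub {R : realType} {n : nat} (B : 'M[R]_n) :
  B^T = B -> (forall x, 0 <= form B x x) ->
  forall u, form B u u <= (\sum_k B k k) * n%:R * sq u.
Proof.
move=> hB hpos u; set t := \sum_k B k k.
have hd0 : forall k, 0 <= B k k by move=> k; rewrite -form_delta.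
have hdt : forall k, B k k <= t.
  by move=> k; rewrite /t (bigD1 k) //= lerDl; apply: sumr_ge0 => i _.
have ht0 : 0 <= t by apply: sumr_ge0 => i _.
have hsym : forall i j, B j i = B i j.
  by move=> i j; have := congr1 (fun M : 'M[R]_n => M i j) hB; rewrite mxE.
have hent : forall i j, `|B i j| <= t.
  move=> i j.
  have h1 := hpos (delta_mx i 0 + delta_mx j 0).
  have h2 := hpos (delta_mx i 0 + (-1) *: delta_mx j 0).
  rewrite !formDl !formDr !formZl !formZr !form_delta (hsym i j) in h1 h2.
  have := hdt i; have := hdt j; rewrite ler_norml; move=> hj hi; apply/andP; split; [lra|lra].
have hterm : forall i j, u i 0 * B i j * u j 0 <= t / 2 * (u i 0 ^+ 2 + u j 0 ^+ 2).
  move=> i j; have := hent i j; rewrite ler_norml => /andP [hl hr].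
  have e1 : 0 <= (t - B i j) * (u i 0 + u j 0) ^+ 2 by apply: mulr_ge0; [lra|exact: sqr_ge0].
  have e2 : 0 <= (t + B i j) * (u i 0 - u j 0) ^+ 2 by apply: mulr_ge0; [lra|exact: sqr_ge0].
  nra.
rewrite form_exp.
apply: (le_trans (y := \sum_(j < n) \sum_(i < n) (t / 2 * (u i 0 ^+ 2 + u j 0 ^+ 2)))).
  by apply: ler_sum => j _; apply: ler_sum => i _.
have -> : \sum_(j < n) \sum_(i < n) (t / 2 * (u i 0 ^+ 2 + u j 0 ^+ 2)) =
   \sum_(j < n) (t / 2 * sq u + t / 2 * n%:R * u j 0 ^+ 2).
  apply: eq_bigr => j _; rewrite -mulr_sumr big_split /= sumr_const card_ord sqE.
  by rewrite mulrDr -mulr_natl; ring.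
rewrite big_split /= sumr_const card_ord -mulr_sumr -sqE -mulr_natl; lra.
Qed.

Lemma cs {R : realType} {n : nat} {K : 'M[R]_n} x y : spd K ->
  form K x y ^+ 2 <= form K x x * form K y y.
Proof.
move=> hK; have hs := hK.1.
case: (eqVneq y 0) => [->|hy].
  by rewrite form0r form0l expr0n /= mulr0.
have hc : 0 < form K y y by apply: hK.2.
have h := spd_ge0 (form K y y *: x + (- form K x y) *: y) hK.
rewrite !formDl !formDr !formZl !formZr (form_sym K y x hs) in h.
have ha := spd_ge0 x hK.
set a := form K x x in h ha *; set b := form K x y in h *; set c := form K y y in h hc *.
nra.
Qed.

Lemma spd_lb {R : realType} {n : nat} {K : 'M[R]_n} : spd K ->
  exists2 l : R, 0 < l & forall u, l * sq u <= form K u u.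
Proof.
move=> hK; have hU := spd_unit hK; set Ki := invmx K.
have hKiT : Ki^T = Ki by rewrite /Ki trmx_inv hK.1.
have hKi_eq : forall u, form Ki u u = form K (Ki *m u) (Ki *m u).
  move=> u; rewrite -form_mulr -[X in form _ (X *m u) _]hKiT -form_mull.
  by rewrite mulmxA /Ki mulVmx // mul1mx.
have hKi_pos : forall u, 0 <= form Ki u u.
  by move=> u; rewrite hKi_eq; apply: spd_ge0.
have hub := psd_ub _ hKiT hKi_pos.
set C := (\sum_k Ki k k) * n%:R.
have hC0 : 0 <= C.
  apply: mulr_ge0; last exact: ler0n.
  apply: sumr_ge0 => k _; by rewrite -form_delta.
exists (C + 1)^-1; first by rewrite invr_gt0; lra.
move=> u.
have hcs := cs u (Ki *m u) hK.
have e1 : form K u (Ki *m u) = sq u.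
  by rewrite -form_mulr /Ki mulmxV.
rewrite e1 -hKi_eq in hcs.
have hb := hub u; rewrite -/C in hb.
have hq := sq_ge0 u; have hf := spd_ge0 u hK; have hk := hKi_pos u.
rewrite ler_pdivrMl; last lra.
set s := sq u in hcs hb hq *; set f := form K u u in hcs hf *; set g := form Ki u u in hcs hb hk *.
have h2 : f * g <= f * (C * s) by apply: ler_wpM2l.
have h3 : s * s <= s * (C * f) by rewrite -expr2; lra.
case: (eqVneq s 0) => [->|hs0]; first by apply: mulr_ge0; lra.
have hsp : 0 < s by rewrite lt_def hs0 hq.
have : s <= C * f by rewrite -(ler_pM2l hsp).
lra.
Qed.

Lemma formDA {R : realType} {n : nat} (A B : 'M[R]_n) x y :
  form (A + B) x y = form A x y + form B x y.
Proof. by rewrite /form mulmxDr mulmxDl mxE. Qed.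
Lemma formZA {R : realType} {n : nat} (A : 'M[R]_n) a x y :
  form (a *: A) x y = a * form A x y.
Proof. by rewrite /form -scalemxAr -scalemxAl mxE. Qed.
Lemma sq_mul {R : realType} {n : nat} (A : 'M[R]_n) x :
  sq (A *m x) = form (A^T *m A) x x.
Proof. by rewrite /sq /form trmx_mul mulmx1 !mulmxA. Qed.

Lemma prop_lt1 {R : realType} {n : nat} (Ms Msh Kt Q : 'M[R]_n) (tau : R) :
  spd Msh -> Msh *m Msh = Ms -> spd Kt -> Kt = invmx Msh *m Q *m invmx Msh ->
  0 < tau -> opnorm Ms (propagator Ms Q tau) < 1.
Proof.
move=> hMsh hMsh2 hKt hKtQ htau.
have hU := spd_unit hMsh; have hT := hMsh.1.
have hQ : Q = Msh *m Kt *m Msh.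
  by rewrite hKtQ !mulmxA mulmxV // mul1mx -mulmxA mulVmx // mulmx1.
set E := 1%:M + tau *: Kt.
have hE : spd E.
  split; first by rewrite /E linearD /= linearZ /= trmx1 hKt.1.
  move=> x hx; change (0 < form E x x); rewrite /E formDA formZA.
  have := sq_gt0 hx; have := spd_ge0 x hKt; rewrite /sq => h1 h2.
  have : 0 <= tau * form Kt x x by apply: mulr_ge0 => //; exact: ltW.
  lra.
have hEU := spd_unit hE.
have hMQ : Ms + tau *: Q = Msh *m E *m Msh.
  by rewrite hQ -hMsh2 /E mulmxDr mulmxDl mulmx1 -scalemxAr -scalemxAl.
have hMQU : Ms + tau *: Q \in unitmx by rewrite hMQ !unitmx_mul hU hEU.
have hmn : forall x, mnorm Ms x = Num.sqrt (sq (Msh *m x)).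
  by move=> x; rewrite sq_mul hT hMsh2.
have [l hl0 hl] := spd_lb hKt.
set d := 1 + 2 * tau * l.
have hd : 1 < d by rewrite /d; have := mulr_gt0 htau hl0; lra.
set c := Num.sqrt d^-1.
have hc1 : c < 1.
  by rewrite /c -sqrtr1 ltr_sqrt // invf_lt1 //; lra.
have hc0 : 0 <= c by apply: sqrtr_ge0.
have hbound : forall v : 'cV[R]_n, v != 0 ->
    mnorm Ms (propagator Ms Q tau *m v) / mnorm Ms v <= c.
  move=> v hv.
  set y := propagator Ms Q tau *m v.
  have hy : (Ms + tau *: Q) *m y = Ms *m v.
    by rewrite /y /propagator !mulmxA mulmxV // mul1mx.
  have hz : E *m (Msh *m y) = Msh *m v.
    move: hy; rewrite hMQ -hMsh2 => hy.
    have := congr1 (mulmx (invmx Msh)) hy.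
    by rewrite !mulmxA mulVmx // !mul1mx -!mulmxA.
  set z := Msh *m y in hz *; set w := Msh *m v in hz *.
  have hw0 : w != 0.
    apply/negP => /eqP hw; move/negP: hv; apply; apply/eqP.
    by rewrite -(mulKmx hU v) -/w hw mulmx0.
  have hsw : sq w = sq z + 2 * tau * form Kt z z + tau ^+ 2 * sq (Kt *m z).
    rewrite -hz /E mulmxDl mul1mx -scalemxAl /sq.
    rewrite !formDl !formDr !formZl !formZr.
    rewrite (form_sym 1%:M (Kt *m z) z (trmx1 _ _)) -form_mulr mul1mx.
    ring.
  have hq1 := sq_ge0 (Kt *m z); have hq2 := hl z; have hqz := sq_ge0 z.
  have hwz : d * sq z <= sq w.
    rewrite hsw /d.
    have : 0 <= tau ^+ 2 * sq (Kt *m z) by apply: mulr_ge0 => //; exact: sqr_ge0.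
    have : 2 * tau * (l * sq z) <= 2 * tau * form Kt z z.
      by apply: ler_wpM2l => //; apply: mulr_ge0 => //; exact: ltW.
    lra.
  have hswp : 0 < sq w := sq_gt0 hw0.
  rewrite !hmn -/z -/w ler_pdivrMr ?sqrtr_gt0 // /c -sqrtrM ?invr_ge0; last lra.
  apply: ler_wsqrtr.
  have hd0 : 0 < d by lra.
  have -> : d^-1 * sq w = sq w / d by rewrite mulrC.
  by rewrite ler_pdivlMr // mulrC.
pose S := (fun r : R => exists v : 'cV[R]_n, v != 0 /\
   r = mnorm Ms (propagator Ms Q tau *m v) / mnorm Ms v).
rewrite /opnorm -/S.
case: (pselect (S !=set0)%classic) => hne.
  apply: (le_lt_trans _ hc1); apply: ge_sup => // r [v [hv ->]]; exact: hbound.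
have -> : S = set0%classic.
  apply/seteqP; split => r // hr; exfalso; apply: hne; by exists r.
by rewrite sup0 ltr01.
Qed.

Lemma mono_lt {R : realType} (N : nat) (t : nat -> R) :
  (forall j : nat, (1 <= j <= N)%N -> t j.-1 < t j) ->
  forall i j : nat, (i < j)%N -> (j <= N)%N -> t i < t j.
Proof.
move=> hm i j hij; rewrite -(subnKC hij).
elim: (j - i.+1)%N => [|d IH] hN.
  rewrite addn0 in hN *; have := hm i.+1; rewrite /= hN; apply; done.
apply: (lt_trans (IH _)); first by apply: leq_trans hN; rewrite addnS.
have := hm (i.+1 + d.+1)%N; rewrite addnS /=; apply.
by rewrite -addnS hN.
Qed.

Theorem theorem2 (R : realType) (n p : nat)
  (Ms As Msh : 'M[R]_n) (Mz Az : 'M[R]_p.+1)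
  (hMs : spd Ms)
  (hMsh : spd Msh) (hMsh2 : Msh *m Msh = Ms)  (* Msh = Ms^{1/2} *)
  (hK : spd (invmx Msh *m Qs Ms As Mz Az *m invmx Msh))
  (N m Nc : nat) (T : R) (t : nat -> R)
  (ht0 : t 0%N = 0) (htN : t N = T)
  (hmono : forall j : nat, (1 <= j <= N)%N -> t j.-1 < t j)
  (hm : (0 < m)%N) (hN : N = (m * Nc)%N) :
  (forall j : nat, (1 <= j <= N)%N ->
     opnorm Ms (propagator Ms (Qs Ms As Mz Az) (t j - t j.-1)) < 1) /\
  (forall k : nat, (1 <= k <= Nc)%N ->
     opnorm Ms (propagator Ms (Qs Ms As Mz Az) (t (m * k)%N - t (m * k.-1)%N)) < 1).
Proof.
split.
  move=> j hj; apply: (prop_lt1 _ _ _ _ _ hMsh hMsh2 hK) => //.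
  by rewrite subr_gt0; apply: hmono.
move=> k /andP [hk1 hk2]; apply: (prop_lt1 _ _ _ _ _ hMsh hMsh2 hK) => //.
rewrite subr_gt0; apply: (mono_lt _ _ hmono).
  by rewrite ltn_pmul2l // prednK ?ltnSn // ltnW.
by rewrite hN leq_pmul2l.
Qed.
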